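(* Let $L$ be a pentagonal linkage and $X_k=\{P\in\overline{M^C}(L): |A_3A_5|=k\}$ a slice. On the relative interior of $X_k$, parameterize the slice by $x_2$ and denote by a prime the derivative $d/dx_2$. Then $$(-x_1)'=\frac{S_{125}}{S_{123}}\cdot\frac{S_{235}}{S_{135}},\qquad (-x_3)'=\frac{S_{234}}{S_{135}}\cdot\frac{S_{125}}{S_{123}},\qquad (x_5)'=\frac{S_{145}}{S_{135}}.$$
   Context: A pentagonal linkage $L$ is given by side lengths $a_1,\dots,a_5>0$; $M(L)$ is the set of planar 5-gons $(A_1,\dots,A_5)$ with $|A_iA_{i+1}|=a_i$ (indices mod 5) modulo all isometries of $\mathbb{R}^2$; $M^C(L)$ is the set of strictly convex configurations (convex pentagon $A_1\dots A_5$ in this cyclic order, no angle equal to $\pi$) and $\overline{M^C}(L)$ its closure. $b_i=|A_{i-1}A_{i+1}|$, $x_i=b_i^2$ (indices mod 5); on a slice $x_4=k^2$ is fixed and $x_1,x_3,x_5$ are functions of $x_2$. $S_{ijk}$ is the oriented area of triangle $A_iA_jA_k$ with respect to a fixed orientation of the plane. *)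

(* Defs.v *)
From Stdlib Require Import Reals Lra Arith.
From Coquelicot Require Import Coquelicot.
Open Scope R_scope.

Definition pt : Type := (R * R)%type.

Definition edist (P Q : pt) : R :=
  sqrt ((fst P - fst Q) ^ 2 + (snd P - snd Q) ^ 2).

Definition oarea (P Q T : pt) : R :=
  ((fst Q - fst P) * (snd T - snd P) - (fst T - fst P) * (snd Q - snd P)) / 2.

(* A configuration (planar 5-gon) is a map C : nat -> pt; the vertex A_i is
   C (i mod 5), so indices are taken mod 5 (A_5 = A_0). *)
Definition config : Type := nat -> pt.
Definition V (C : config) (i : nat) : pt := C (i mod 5).

Definition realizes (a : nat -> R) (C : config) : Prop :=
  forall i : nat, (1 <= i <= 5)%nat -> edist (V C i) (V C (S i)) = a i.

Definition strictly_convex (C : config) : Prop :=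
  (forall i j : nat, (1 <= i <= 5)%nat -> (1 <= j <= 5)%nat ->
     j mod 5 <> i mod 5 -> j mod 5 <> (S i) mod 5 ->
     0 < oarea (V C i) (V C (S i)) (V C j))
  \/
  (forall i j : nat, (1 <= i <= 5)%nat -> (1 <= j <= 5)%nat ->
     j mod 5 <> i mod 5 -> j mod 5 <> (S i) mod 5 ->
     oarea (V C i) (V C (S i)) (V C j) < 0).

(* x_i = b_i^2 = |A_{i-1} A_{i+1}|^2. *)
Definition xsq (C : config) (i : nat) : R :=
  edist (V C (i + 4)) (V C (S i)) ^ 2.

Definition Sa (C : config) (i j k : nat) : R := oarea (V C i) (V C j) (V C k).

(* Main.v *)
Require Import Defs.
From Stdlib Require Import Reals Lra Lia.
From Coquelicot Require Import Coquelicot.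
Open Scope R_scope.

Definition sqd (P Q : pt) : R := (fst P - fst Q) ^ 2 + (snd P - snd Q) ^ 2.
Definition dd (P Q U W : pt) : R :=
  (fst P - fst Q) * (fst U - fst W) + (snd P - snd Q) * (snd U - snd W).

Lemma edist_sq P Q : edist P Q ^ 2 = sqd P Q.
Proof.
  unfold edist, sqd. rewrite pow2_sqrt; [reflexivity|].
  apply Rplus_le_le_0_compat; apply pow2_ge_0.
Qed.

Lemma Dsqd_gen (f1 f2 g1 g2 : R -> R) t :
  ex_derive f1 t -> ex_derive f2 t -> ex_derive g1 t -> ex_derive g2 t ->
  Derive (fun s => (f1 s - f2 s) ^ 2 + (g1 s - g2 s) ^ 2) t =
  2 * ((f1 t - f2 t) * (Derive f1 t - Derive f2 t) +
       (g1 t - g2 t) * (Derive g1 t - Derive g2 t)).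
Proof.
  intros. apply is_derive_unique. auto_derive; [tauto|].
  change (fun x => f1 x) with f1. change (fun x => f2 x) with f2.
  change (fun x => g1 x) with g1. change (fun x => g2 x) with g2. ring.
Qed.

Definition vel (gamma : R -> config) (i : nat) (t : R) : pt :=
  (Derive (fun s => fst (gamma s i)) t, Derive (fun s => snd (gamma s i)) t).

Lemma Dsqd (gamma : R -> config) i j t :
  ex_derive (fun s => fst (gamma s i)) t -> ex_derive (fun s => snd (gamma s i)) t ->
  ex_derive (fun s => fst (gamma s j)) t -> ex_derive (fun s => snd (gamma s j)) t ->
  Derive (fun s => sqd (gamma s i) (gamma s j)) t =
  2 * dd (gamma t i) (gamma t j) (vel gamma i t) (vel gamma j t).
Proof.
  intros. unfold sqd, dd, vel; simpl.
  apply (Dsqd_gen (fun s => fst (gamma s i)) (fun s => fst (gamma s j))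
                  (fun s => snd (gamma s i)) (fun s => snd (gamma s j))); auto.
Qed.

Lemma Dconst (f : R -> R) (c lo hi t : R) :
  lo < t < hi -> (forall s, lo < s < hi -> f s = c) -> Derive f t = 0.
Proof.
  intros Ht Hf.
  rewrite (Derive_ext_loc f (fun _ => c)). apply Derive_const.
  assert (He : 0 < Rmin (t - lo) (hi - t)) by (apply Rmin_glb_lt; lra).
  exists (mkposreal _ He). intros y Hy. apply Hf.
  change (Rabs (y - t) < Rmin (t - lo) (hi - t)) in Hy.
  apply Rabs_def2 in Hy. destruct Hy as [H1 H2].
  pose proof (Rmin_l (t - lo) (hi - t)). pose proof (Rmin_r (t - lo) (hi - t)).
  lra.
Qed.

Lemma alg (P0 P1 P2 P3 P4 U0 U1 U2 U3 U4 : pt) (e02 e13 e24 e41 : R) :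
  dd P1 P2 U1 U2 = 0 -> dd P2 P3 U2 U3 = 0 -> dd P3 P4 U3 U4 = 0 ->
  dd P4 P0 U4 U0 = 0 -> dd P0 P1 U0 U1 = 0 -> dd P3 P0 U3 U0 = 0 ->
  oarea P1 P2 P3 <> 0 -> oarea P1 P3 P0 <> 0 -> oarea P2 P3 P0 <> 0 ->
  oarea P3 P4 P0 <> 0 ->
  e02 = dd P0 P2 U0 U2 -> e13 = dd P1 P3 U1 U3 -> e24 = dd P2 P4 U2 U4 ->
  e41 = dd P4 P1 U4 U1 ->
  - (2 * e02) = oarea P1 P2 P0 / oarea P1 P2 P3 * (oarea P2 P3 P0 / oarea P1 P3 P0) * (2 * e13)
  /\ - (2 * e24) = oarea P2 P3 P4 / oarea P1 P3 P0 * (oarea P1 P2 P0 / oarea P1 P2 P3) * (2 * e13)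
  /\ 2 * e41 = oarea P1 P4 P0 / oarea P1 P3 P0 * (2 * e13).
Proof.
  intros H12 H23 H34 H40 H01 H30 N123 N135 N235 N345 E02 E13 E24 E41.
  assert (F1 : oarea P1 P2 P0 * oarea P3 P2 P0 * dd P1 P3 U1 U3
             + oarea P2 P1 P3 * oarea P0 P1 P3 * dd P0 P2 U0 U2
             + oarea P1 P3 P0 * oarea P2 P3 P0 * dd P1 P2 U1 U2
             + oarea P2 P1 P0 * oarea P3 P1 P0 * dd P2 P3 U2 U3
             + oarea P3 P1 P2 * oarea P0 P1 P2 * dd P3 P0 U3 U0
             + oarea P1 P2 P3 * oarea P0 P2 P3 * dd P0 P1 U0 U1 = 0)
    by (unfold oarea, dd; field).
  rewrite H12, H23, H30, H01 in F1.
  assert (F2 : oarea P2 P3 P0 * oarea P4 P3 P0 * dd P2 P4 U2 U4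
             + oarea P2 P3 P4 * oarea P0 P3 P4 * dd P0 P2 U0 U2
             + oarea P2 P4 P0 * oarea P3 P4 P0 * dd P2 P3 U2 U3
             + oarea P3 P2 P0 * oarea P4 P2 P0 * dd P3 P4 U3 U4
             + oarea P3 P2 P4 * oarea P0 P2 P4 * dd P3 P0 U3 U0
             + oarea P4 P2 P3 * oarea P0 P2 P3 * dd P4 P0 U4 U0 = 0)
    by (unfold oarea, dd; field).
  rewrite H23, H34, H30, H40 in F2.
  assert (F3 : oarea P1 P4 P0 * oarea P3 P4 P0 * dd P1 P3 U1 U3
             + oarea P1 P3 P0 * oarea P4 P3 P0 * dd P4 P1 U4 U1
             + oarea P1 P3 P4 * oarea P0 P3 P4 * dd P1 P0 U1 U0
             + oarea P3 P1 P0 * oarea P4 P1 P0 * dd P3 P4 U3 U4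
             + oarea P3 P1 P4 * oarea P0 P1 P4 * dd P3 P0 U3 U0
             + oarea P4 P1 P3 * oarea P0 P1 P3 * dd P4 P0 U4 U0 = 0)
    by (unfold oarea, dd; field).
  assert (H10 : dd P1 P0 U1 U0 = 0) by (rewrite <- H01; unfold dd; ring).
  rewrite H10, H34, H30, H40 in F3.
  rewrite <- E02, <- E13 in F1. rewrite <- E24, <- E02 in F2.
  rewrite <- E41, <- E13 in F3.
  assert (G1 : - (2 * e02) = oarea P1 P2 P0 / oarea P1 P2 P3 * (oarea P2 P3 P0 / oarea P1 P3 P0) * (2 * e13)).
  { apply (Rmult_eq_reg_l (oarea P1 P2 P3 * oarea P1 P3 P0));
      [| apply Rmult_integral_contrapositive; split; assumption].
    replace (oarea P1 P2 P3 * oarea P1 P3 P0 *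
      (oarea P1 P2 P0 / oarea P1 P2 P3 * (oarea P2 P3 P0 / oarea P1 P3 P0) * (2 * e13)))
      with (oarea P1 P2 P0 * oarea P2 P3 P0 * (2 * e13)) by (field; split; assumption).
    unfold oarea in *. lra. }
  assert (G2 : e24 = oarea P2 P3 P4 / oarea P2 P3 P0 * e02).
  { apply (Rmult_eq_reg_l (oarea P2 P3 P0 * oarea P3 P4 P0));
      [| apply Rmult_integral_contrapositive; split; assumption].
    replace (oarea P2 P3 P0 * oarea P3 P4 P0 * (oarea P2 P3 P4 / oarea P2 P3 P0 * e02))
      with (oarea P3 P4 P0 * oarea P2 P3 P4 * e02) by (field; assumption).
    unfold oarea in *. lra. }
  split; [exact G1|split].
  - rewrite G2. replace (- (2 * (oarea P2 P3 P4 / oarea P2 P3 P0 * e02)))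
      with (oarea P2 P3 P4 / oarea P2 P3 P0 * (- (2 * e02))) by ring.
    rewrite G1. field. repeat split; assumption.
  - apply (Rmult_eq_reg_l (oarea P1 P3 P0 * oarea P3 P4 P0));
      [| apply Rmult_integral_contrapositive; split; assumption].
    replace (oarea P1 P3 P0 * oarea P3 P4 P0 * (oarea P1 P4 P0 / oarea P1 P3 P0 * (2 * e13)))
      with (oarea P3 P4 P0 * oarea P1 P4 P0 * (2 * e13)) by (field; assumption).
    unfold oarea in *. lra.
Qed.

Lemma xsq_eqs (C : config) :
  xsq C 1 = sqd (C 0%nat) (C 2%nat) /\ xsq C 2 = sqd (C 1%nat) (C 3%nat) /\
  xsq C 3 = sqd (C 2%nat) (C 4%nat) /\ xsq C 5 = sqd (C 4%nat) (C 1%nat).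
Proof. unfold xsq; rewrite !edist_sq; repeat split; reflexivity. Qed.

Lemma sides a C : realizes a C ->
  sqd (C 1%nat) (C 2%nat) = a 1%nat ^ 2 /\ sqd (C 2%nat) (C 3%nat) = a 2%nat ^ 2 /\
  sqd (C 3%nat) (C 4%nat) = a 3%nat ^ 2 /\ sqd (C 4%nat) (C 0%nat) = a 4%nat ^ 2 /\
  sqd (C 0%nat) (C 1%nat) = a 5%nat ^ 2.
Proof.
  intro H. rewrite <- !edist_sq.
  rewrite <- (H 1%nat), <- (H 2%nat), <- (H 3%nat), <- (H 4%nat), <- (H 5%nat)
    by (split; repeat constructor).
  repeat split; reflexivity.
Qed.

Lemma convex_nz C : strictly_convex C ->
  oarea (C 1%nat) (C 2%nat) (C 3%nat) <> 0 /\ oarea (C 1%nat) (C 3%nat) (C 0%nat) <> 0 /\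
  oarea (C 2%nat) (C 3%nat) (C 0%nat) <> 0 /\ oarea (C 3%nat) (C 4%nat) (C 0%nat) <> 0.
Proof.
  intro H.
  assert (E : oarea (C 1%nat) (C 3%nat) (C 0%nat) = oarea (C 0%nat) (C 1%nat) (C 3%nat))
    by (unfold oarea; field).
  rewrite E.
  destruct H as [H|H].
  - pose proof (H 1%nat 3%nat) as A. pose proof (H 5%nat 3%nat) as B.
    pose proof (H 2%nat 5%nat) as D. pose proof (H 3%nat 5%nat) as G.
    unfold V in A, B, D, G; simpl in A, B, D, G.
    specialize (A ltac:(lia) ltac:(lia) ltac:(discriminate) ltac:(discriminate)).
    specialize (B ltac:(lia) ltac:(lia) ltac:(discriminate) ltac:(discriminate)).
    specialize (D ltac:(lia) ltac:(lia) ltac:(discriminate) ltac:(discriminate)).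
    specialize (G ltac:(lia) ltac:(lia) ltac:(discriminate) ltac:(discriminate)).
    repeat split; lra.
  - pose proof (H 1%nat 3%nat) as A. pose proof (H 5%nat 3%nat) as B.
    pose proof (H 2%nat 5%nat) as D. pose proof (H 3%nat 5%nat) as G.
    unfold V in A, B, D, G; simpl in A, B, D, G.
    specialize (A ltac:(lia) ltac:(lia) ltac:(discriminate) ltac:(discriminate)).
    specialize (B ltac:(lia) ltac:(lia) ltac:(discriminate) ltac:(discriminate)).
    specialize (D ltac:(lia) ltac:(lia) ltac:(discriminate) ltac:(discriminate)).
    specialize (G ltac:(lia) ltac:(lia) ltac:(discriminate) ltac:(discriminate)).
    repeat split; lra.
Qed.

Theorem lemma4 (a : nat -> R) (k : R) (gamma : R -> config) (lo hi : R) :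
  (forall i : nat, (1 <= i <= 5)%nat -> 0 < a i) ->
  (forall t, lo < t < hi ->
     realizes a (gamma t) /\ strictly_convex (gamma t) /\
     edist (V (gamma t) 3) (V (gamma t) 5) = k) ->
  (forall t, lo < t < hi -> forall i : nat,
     ex_derive (fun s => fst (gamma s i)) t /\
     ex_derive (fun s => snd (gamma s i)) t) ->
  forall t, lo < t < hi ->
    Derive (fun s => - xsq (gamma s) 1) t =
      (Sa (gamma t) 1 2 5 / Sa (gamma t) 1 2 3) *
      (Sa (gamma t) 2 3 5 / Sa (gamma t) 1 3 5) *
      Derive (fun s => xsq (gamma s) 2) t
    /\
    Derive (fun s => - xsq (gamma s) 3) t =
      (Sa (gamma t) 2 3 4 / Sa (gamma t) 1 3 5) *
      (Sa (gamma t) 1 2 5 / Sa (gamma t) 1 2 3) *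
      Derive (fun s => xsq (gamma s) 2) t
    /\
    Derive (fun s => xsq (gamma s) 5) t =
      (Sa (gamma t) 1 4 5 / Sa (gamma t) 1 3 5) *
      Derive (fun s => xsq (gamma s) 2) t.
Proof.
  intros Ha Hc Hd t Ht.
  assert (DS : forall i j, Derive (fun s => sqd (gamma s i) (gamma s j)) t =
    2 * dd (gamma t i) (gamma t j) (vel gamma i t) (vel gamma j t)).
  { intros i j. destruct (Hd t Ht i), (Hd t Ht j). apply Dsqd; assumption. }
  assert (Z : forall i j (f : R -> R), (forall s, lo < s < hi -> sqd (gamma s i) (gamma s j) = f s) ->
     (forall s, lo < s < hi -> f s = f t) ->
     dd (gamma t i) (gamma t j) (vel gamma i t) (vel gamma j t) = 0).
  { intros i j f H1 H2.
    assert (D0 : Derive (fun s => sqd (gamma s i) (gamma s j)) t = 0).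
    { apply (Dconst _ (f t) lo hi); [assumption|]. intros s Hs. rewrite H1 by assumption.
      apply H2; assumption. }
    rewrite DS in D0. lra. }
  assert (Z12 := Z 1%nat 2%nat (fun _ => a 1%nat ^ 2)
     ltac:(intros s Hs; destruct (Hc s Hs) as [R _]; apply (sides a _ R)) ltac:(reflexivity)).
  assert (Z23 := Z 2%nat 3%nat (fun _ => a 2%nat ^ 2)
     ltac:(intros s Hs; destruct (Hc s Hs) as [R _]; apply (sides a _ R)) ltac:(reflexivity)).
  assert (Z34 := Z 3%nat 4%nat (fun _ => a 3%nat ^ 2)
     ltac:(intros s Hs; destruct (Hc s Hs) as [R _]; apply (sides a _ R)) ltac:(reflexivity)).
  assert (Z40 := Z 4%nat 0%nat (fun _ => a 4%nat ^ 2)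
     ltac:(intros s Hs; destruct (Hc s Hs) as [R _]; apply (sides a _ R)) ltac:(reflexivity)).
  assert (Z01 := Z 0%nat 1%nat (fun _ => a 5%nat ^ 2)
     ltac:(intros s Hs; destruct (Hc s Hs) as [R _]; apply (sides a _ R)) ltac:(reflexivity)).
  assert (Z30 := Z 3%nat 0%nat (fun _ => k ^ 2)
     ltac:(intros s Hs; destruct (Hc s Hs) as [_ [_ K]]; rewrite <- K, edist_sq; reflexivity)
     ltac:(reflexivity)).
  rewrite (Derive_ext (fun s => - xsq (gamma s) 1) (fun s => - sqd (gamma s 0%nat) (gamma s 2%nat)))
    by (intro s; destruct (xsq_eqs (gamma s)) as [E _]; rewrite E; reflexivity).
  rewrite (Derive_ext (fun s => - xsq (gamma s) 3) (fun s => - sqd (gamma s 2%nat) (gamma s 4%nat)))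
    by (intro s; destruct (xsq_eqs (gamma s)) as [_ [_ [E _]]]; rewrite E; reflexivity).
  rewrite (Derive_ext (fun s => xsq (gamma s) 2) (fun s => sqd (gamma s 1%nat) (gamma s 3%nat)))
    by (intro s; destruct (xsq_eqs (gamma s)) as [_ [E _]]; rewrite E; reflexivity).
  rewrite (Derive_ext (fun s => xsq (gamma s) 5) (fun s => sqd (gamma s 4%nat) (gamma s 1%nat)))
    by (intro s; destruct (xsq_eqs (gamma s)) as [_ [_ [_ E]]]; rewrite E; reflexivity).
  rewrite !Derive_opp, !DS.
  destruct (Hc t Ht) as [_ [Cv _]].
  destruct (convex_nz _ Cv) as [N1 [N2 [N3 N4]]].
  exact (alg _ _ _ _ _ _ _ _ _ _ _ _ _ _ Z12 Z23 Z34 Z40 Z01 Z30 N1 N2 N3 N4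
           eq_refl eq_refl eq_refl eq_refl).
Qed.
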